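(* Let $\mathcal C\subseteq 2^{[n]}$ be a code and suppose that a neuron $i\in[n]$ is a piercing of $\mathcal C$ (i.e. a $k$-piercing for some $k$). Then $\mathcal C$ is inductively pierced if and only if $\mathcal C\setminus i$ is inductively pierced.
   Context: A code is a set $\mathcal C\subseteq 2^{[n]}$, $[n]=\{1,\dots,n\}$, elements of $[n]$ being neurons. Standing conventions: $\emptyset\in\mathcal C$; every neuron lies in some codeword; no two distinct neurons lie in exactly the same codewords. $\mathcal C\setminus i$ is obtained by removing $i$ from every codeword. For $\sigma\subseteq\tau$, $[\sigma,\tau]=\{\gamma:\sigma\subseteq\gamma\subseteq\tau\}$, of rank $|\tau\setminus\sigma|$. A neuron $i$ is a $k$-piercing of $\mathcal C$ if there are $\sigma\subseteq\tau\subseteq[n]\setminus\{i\}$ with $[\sigma,\tau]$ of rank $k$, $[\sigma,\tau]\subseteq\mathcal C\setminus i$, and $\mathcal C=(\mathcal C\setminus i)\cup[\sigma\cup\{i\},\tau\cup\{i\}]$. A code is $k$-inductively pierced if $\mathcal C=\{\emptyset\}$, or some neuron $j$ is a $k'$-piercing for some $k'\le k$ and $\mathcal C\setminus j$ is $k$-inductively pierced; inductively pierced means $k$-inductively pierced for some $k$. *)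

(* Defs.v *)
(* Neurons are 'I_n (representing [n] = {1,...,n}),
   codewords are {set 'I_n}, codes are {set {set 'I_n}}. *)
From mathcomp Require Import all_boot.
Set Implicit Arguments. Unset Strict Implicit. Unset Printing Implicit Defensive.

Definition is_code (n : nat) (C : {set {set 'I_n}}) : Prop :=
  [/\ set0 \in C,
      (forall j : 'I_n, exists2 c, c \in C & j \in c)
    & (forall j l : 'I_n, (forall c, c \in C -> (j \in c) = (l \in c)) -> j = l)].

Definition del_neuron (n : nat) (C : {set {set 'I_n}}) (i : 'I_n) : {set {set 'I_n}} :=
  [set c :\ i | c in C].

Definition interval_set (n : nat) (sigma tau : {set 'I_n}) : {set {set 'I_n}} :=
  [set g : {set 'I_n} | (sigma \subset g) && (g \subset tau)].

Definition k_piercing (n : nat) (k : nat) (C : {set {set 'I_n}}) (i : 'I_n) : Prop :=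
  exists sigma tau : {set 'I_n},
    [/\ sigma \subset tau, i \notin tau,
        #|tau :\: sigma| = k,
        interval_set sigma tau \subset del_neuron C i
      & C = del_neuron C i :|: interval_set (i |: sigma) (i |: tau)].

Definition is_piercing (n : nat) (C : {set {set 'I_n}}) (i : 'I_n) : Prop :=
  exists k, k_piercing k C i.

Inductive k_ind_pierced (n : nat) (k : nat) : {set {set 'I_n}} -> Prop :=
  | kip_base : k_ind_pierced k [set set0]
  | kip_step (C : {set {set 'I_n}}) (j : 'I_n) (k' : nat) :
      k' <= k -> k_piercing k' C j -> k_ind_pierced k (del_neuron C j) ->
      k_ind_pierced k C.

Definition ind_pierced (n : nat) (C : {set {set 'I_n}}) : Prop :=
  exists k, k_ind_pierced k C.

(* Main.v *)
Require Import Defs.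
From mathcomp Require Import all_boot.

Lemma del_interval n (a b : {set 'I_n}) j : a \subset b ->
  [set c :\ j | c in interval_set a b] = interval_set (a :\ j) (b :\ j).
Proof.
move=> ab; apply/setP => g; rewrite /interval_set inE; apply/imsetP/andP.
- case=> c; rewrite inE => /andP[ac cb] ->; split; exact: setSD.
- case=> ag gb; exists (g :|: a).
    rewrite inE subsetUr /= subUset ab andbT; exact: subset_trans gb (subsetDl _ _).
  apply/setP => x; rewrite !inE.
  case: (eqVneq x j) => [->|xj] /=.
    apply/negbTE/negP => /(subsetP gb); by rewrite !inE eqxx.
  case gx: (x \in g) => //=.
  apply/esym/negbTE/negP=> xa; have := subsetP ag x; by rewrite !inE xj xa gx => /(_ isT).
Qed.

Lemma del_comm n (C : {set {set 'I_n}}) i j :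
  del_neuron (del_neuron C j) i = del_neuron (del_neuron C i) j.
Proof.
rewrite /del_neuron -!imset_comp; apply: eq_imset => c /=.
by rewrite !setDDl setUC.
Qed.

Lemma pierce_del n k (C : {set {set 'I_n}}) i j : i != j -> k_piercing k C i ->
  exists2 k2, k2 <= k & k_piercing k2 (del_neuron C j) i.
Proof.
move=> ij [s [t [st it card sub eqC]]].
exists #|(t:\j) :\: (s:\j)|.
  rewrite -card; apply: subset_leq_card; apply/subsetP=> x; rewrite !inE.
  move=> /andP[H1 /andP[H2 H3]]; rewrite H3 andbT; by apply: contra H1 => ->; rewrite H2.
exists (s:\j), (t:\j); split.
- exact: setSD.
- by rewrite inE negb_and it orbT.
- done.
- rewrite -del_interval // del_comm; exact: imsetS.
- rewrite del_comm.
  have -> : del_neuron C j =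
     del_neuron (del_neuron C i :|: interval_set (i |: s) (i |: t)) j by rewrite -eqC.
  rewrite /del_neuron imsetU; congr (_ :|: _).
  rewrite del_interval; last by apply: setUS.
  have E : forall u : {set 'I_n}, (i |: u) :\ j = i |: (u :\ j).
    move=> u; apply/setP => x; rewrite !inE.
    case: (eqVneq x i) => [->|xi] //=; by rewrite ij.
  by rewrite !E.
Qed.

Lemma kip_del n k (C : {set {set 'I_n}}) : k_ind_pierced k C ->
  forall i k0, k_piercing k0 C i -> k_ind_pierced k (del_neuron C i).
Proof.
elim=> [|D j k' kk' pj HD IH] i k0.
  case=> s [t [st _ _ _ eqC]].
  have : i |: s \in [set set0 : {set 'I_n}].
    rewrite eqC; apply/setUP; right; by rewrite inE subxx /= setUS.
  rewrite inE => /eqP/setP/(_ i); by rewrite !inE eqxx.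
move=> pi.
case: (eqVneq i j) => [->|ij]; first done.
have [k2 _ pi'] := @pierce_del _ _ _ _ _ ij pi.
have := IH _ _ pi'; rewrite del_comm => H.
have ji : j != i by rewrite eq_sym.
have [k3 k3le pj'] := @pierce_del _ _ _ _ _ ji pj.
exact: (kip_step (leq_trans k3le kk') pj' H).
Qed.

Theorem proposition1p8 (n : nat) (C : {set {set 'I_n}}) (i : 'I_n) :
  is_code C -> is_piercing C i ->
  (ind_pierced C <-> ind_pierced (del_neuron C i)).
Proof.
move=> _ [k0 pi]; split.
  case=> k H; exists k; exact: kip_del H _ _ pi.
case=> k H; exists (maxn k k0).
apply: (kip_step (leq_maxr k k0) pi).
elim: H => [|D j k' kk' pj _ IH]; first exact: kip_base.
exact: (kip_step (leq_trans kk' (leq_maxl k k0)) pj IH).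
Qed.
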